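(* Let $p,q\in\mathbb{C}$ with $pq\neq1$ and $(p,q)\neq(\tfrac12,\tfrac12)$, and let $\xi_{p,q}\in\mathbb{P}^1(\mathbb{C})$ be as defined below. Then $\mathcal{S}_{p,q}$ is regular if and only if $\xi_{p,q}\neq\infty$ and $|\xi_{p,q}|\le1$. Moreover, if $\mathcal{S}_{p,q}$ is regular, then for every positive triangle triple $\Delta$ one has $\phi(\mathcal{S}_{p,q}(\Delta))=\xi_{p,q}^3\,\phi(\Delta)$.
   Context: $\omega=e^{2\pi i/3}$, $\mathcal{H}^+=\{z:\operatorname{Im}z>0\}$. A triangle triple is $(a,b,c)\in\mathbb{C}^3$ with pairwise distinct entries; it is positive if non-collinear and $\operatorname{Im}\frac{a-b}{c-b}>0$. For $pq\neq1$, $\alpha_{p,q}=\frac{p(1-q)}{1-pq}$, $\beta_{p,q}=\frac{q(1-p)}{1-pq}$, $\gamma_{p,q}=\frac{(1-p)(1-q)}{1-pq}$ and $\mathcal{S}_{p,q}(a,b,c)=(\alpha_{p,q}a+\beta_{p,q}b+\gamma_{p,q}c,\ \alpha_{p,q}b+\beta_{p,q}c+\gamma_{p,q}a,\ \alpha_{p,q}c+\beta_{p,q}a+\gamma_{p,q}b)$. $\mathcal{S}_{p,q}$ is called regular if either $p=q\neq\frac12$, or $p\neq q$ and $t_{p,q}:=\frac{(p-1)(2q-1)}{p-q}\in\mathbb{R}\cup\mathcal{H}^+$. Define $\xi_{p,q}=\frac{(p-q)+(p-1)(2q-1)\omega}{(p-q)+(p-1)(2q-1)\omega^2}\in\mathbb{P}^1(\mathbb{C})$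 (numerator and denominator do not both vanish when $(p,q)\neq(\frac12,\frac12)$, $pq\ne 1$). For a positive triangle triple $(a,b,c)$, its modulus is $\phi(a,b,c)=\left(\frac{a+b\omega+c\omega^2}{a+b\omega^2+c\omega}\right)^3$, which lies in the unit disk $\{|z|<1\}$. *)

(* Defs.v *)
(* The complex numbers are modelled by an arbitrary
   numClosedFieldType C (of which the complex field is an instance). *)
From HB Require Import structures.
From mathcomp Require Import all_boot all_order all_algebra.
Set Implicit Arguments. Unset Strict Implicit. Unset Printing Implicit Defensive.
Import Order.TTheory GRing.Theory Num.Theory.
Local Open Scope ring_scope.

Section Defs.
Variable C : numClosedFieldType.

(* omega = exp(2 pi i / 3) = -1/2 + i sqrt(3)/2 *)
Definition omega : C := (-1 + 'i * sqrtC 3) / 2%:R.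

Definition triangle_triple (a b c : C) : Prop := a != b /\ b != c /\ a != c.

Definition collinear (a b c : C) : Prop := ((a - b) / (c - b)) \is Num.real.

Definition positive_triple (a b c : C) : Prop :=
  triangle_triple a b c /\ ~ collinear a b c /\ 0 < 'Im ((a - b) / (c - b)).

Definition alpha (p q : C) : C := p * (1 - q) / (1 - p * q).
Definition beta (p q : C) : C := q * (1 - p) / (1 - p * q).
Definition gamma (p q : C) : C := (1 - p) * (1 - q) / (1 - p * q).

Definition Spq (p q : C) (t : C * C * C) : C * C * C :=
  let: (a, b, c) := t in
  (alpha p q * a + beta p q * b + gamma p q * c,
   alpha p q * b + beta p q * c + gamma p q * a,
   alpha p q * c + beta p q * a + gamma p q * b).

Definition tpq (p q : C) : C := (p - 1) * (2%:R * q - 1) / (p - q).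

(* t in R ∪ H^+  iff  Im t >= 0 *)
Definition regular (p q : C) : Prop :=
  (p = q /\ p != 2%:R^-1) \/ (p != q /\ 0 <= 'Im (tpq p q)).

(* xi_{p,q} in P^1(C): None represents infinity *)
Definition xi_num (p q : C) : C := (p - q) + (p - 1) * (2%:R * q - 1) * omega.
Definition xi_den (p q : C) : C := (p - q) + (p - 1) * (2%:R * q - 1) * omega ^+ 2.
Definition xi (p q : C) : option C :=
  if xi_den p q == 0 then None else Some (xi_num p q / xi_den p q).

Definition modulus (t : C * C * C) : C :=
  let: (a, b, c) := t in
  ((a + b * omega + c * omega ^+ 2) / (a + b * omega ^+ 2 + c * omega)) ^+ 3.
End Defs.

(* Main.v *)
Require Import Defs.
From HB Require Import structures.
From mathcomp Require Import all_boot all_order all_algebra.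
From mathcomp Require Import ring.
Import Order.TTheory GRing.Theory Num.Theory.
Local Open Scope ring_scope.

Section Aux.
Variable C : numClosedFieldType.
Local Notation w := (omega C).
Local Notation s := (sqrtC (3%:R : C)).

Lemma two_neq0 : (2%:R : C) != 0. Proof. by rewrite pnatr_eq0. Qed.
Lemma hi : ('i : C) ^+ 2 = -1. Proof. exact: sqrCi. Qed.
Lemma hs : s ^+ 2 = 3%:R. Proof. exact: sqrtCK. Qed.
Lemma s_gt0 : 0 < s. Proof. by rewrite sqrtC_gt0 ltr0n. Qed.

Lemma wc : w^* = (-1 - 'i * s) / 2%:R.
Proof.
rewrite /omega fmorph_div /= rmorphD /= rmorphN /= rmorph1 rmorphM /= conjCi conjC_nat.
rewrite (conj_Creal (sqrtC_real _)) ?ler0n //. by rewrite mulNr.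
Qed.

Lemma w2 : w ^+ 2 = w^*.
Proof.
have t2 := two_neq0.
rewrite wc /omega.
have -> : ((-1 + 'i * s) / 2%:R) ^+ 2 = (1 - 2%:R * 'i * s + 'i ^+ 2 * s ^+ 2) / 4%:R :> C.
  by field.
rewrite hi hs; by field.
Qed.

Lemma wd : w - w ^+ 2 = 'i * s.
Proof. rewrite w2 wc /omega; by field. Qed.

Lemma w3 : w ^+ 3 = 1.
Proof.
have -> : w ^+ 3 = w * w ^+ 2 by rewrite exprS.
rewrite w2 wc /omega.
have -> : (-1 + 'i * s) / 2%:R * ((-1 - 'i * s) / 2%:R) = (1 - 'i ^+ 2 * s ^+ 2) / 4%:R :> C.
  by field.
rewrite hi hs; by field.
Qed.

Lemma w1 : 1 + w + w ^+ 2 = 0.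
Proof.
rewrite w2 wc /omega; by field.
Qed.

Lemma wn0 : w != 0.
Proof. apply/eqP => h; have := w3; rewrite h expr0n /= => /eqP; by rewrite eq_sym oner_eq0. Qed.

Lemma normw : `|w| = 1.
Proof.
apply/eqP; rewrite -(pexpr_eq1 (n:=3)) // -normrX w3 normr1 //.
Qed.

Lemma w2c : (w ^+ 2)^* = w.
Proof.
rewrite rmorphXn /= -w2 -exprM.
have -> : (2 * 2 = 1 + 3)%N by []. by rewrite exprD w3 mulr1 expr1.
Qed.

Lemma keyL (u v : C) : u != 0 ->
  `|u + v * w ^+ 2| ^+ 2 - `|u + v * w| ^+ 2 = 2%:R * s * (u * u^*) * 'Im (v / u).
Proof.
move=> hu.
have hU : u^* != 0 by rewrite conjC_eq0.
have c1 : (u + v * w ^+ 2)^* = u^* + v^* * w.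
  rewrite -[X in _ = _ + _ * X]w2c rmorphD rmorphM. reflexivity.
have c2 : (u + v * w)^* = u^* + v^* * w ^+ 2.
  rewrite rmorphD rmorphM w2; reflexivity.
have c3 : (v / u)^* = v^* / u^*.
  rewrite fmorph_div; reflexivity.
rewrite (normCK (u + v * w ^+ 2)) (normCK (u + v * w)) c1 c2 ImE c3.
set U := u^*; set V := v^*.
have -> : (u + v * w ^+ 2) * (U + V * w) - (u + v * w) * (U + V * w ^+ 2)
   = (u * V - v * U) * (w - w ^+ 2) by ring.
rewrite wd. field. by apply/andP; split; [exact: hu | exact: hU].
Qed.

Lemma modA (p q a b c : C) : 1 - p * q != 0 ->
  (alpha p q * a + beta p q * b + gamma p q * c)
  + (alpha p q * b + beta p q * c + gamma p q * a) * w
  + (alpha p q * c + beta p q * a + gamma p q * b) * w ^+ 2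
  = xi_num p q / (1 - p * q) * (a + b * w + c * w ^+ 2).
Proof.
move=> hk; apply/eqP; rewrite -subr_eq0.
set Q := q * (1 - p); set G := (1 - p) * (1 - q).
have -> : (alpha p q * a + beta p q * b + gamma p q * c)
  + (alpha p q * b + beta p q * c + gamma p q * a) * w
  + (alpha p q * c + beta p q * a + gamma p q * b) * w ^+ 2
  - xi_num p q / (1 - p * q) * (a + b * w + c * w ^+ 2)
  = (1 + w + w ^+ 2) * ((1 - w) * (Q * b + G * c + Q * c * w)
       + Q * (a + b * w + c * w ^+ 2)) / (1 - p * q).
  rewrite /alpha /beta /gamma /xi_num /Q /G; by field.
by rewrite w1 mul0r mul0r.
Qed.

Lemma modB (p q a b c : C) : 1 - p * q != 0 ->
  (alpha p q * a + beta p q * b + gamma p q * c)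
  + (alpha p q * b + beta p q * c + gamma p q * a) * w ^+ 2
  + (alpha p q * c + beta p q * a + gamma p q * b) * w
  = xi_den p q / (1 - p * q) * (a + b * w ^+ 2 + c * w).
Proof.
move=> hk; apply/eqP; rewrite -subr_eq0.
set Q := q * (1 - p); set G := (1 - p) * (1 - q).
have -> : (alpha p q * a + beta p q * b + gamma p q * c)
  + (alpha p q * b + beta p q * c + gamma p q * a) * w ^+ 2
  + (alpha p q * c + beta p q * a + gamma p q * b) * w
  - xi_den p q / (1 - p * q) * (a + b * w ^+ 2 + c * w)
  = (1 + w + w ^+ 2) * ((1 - w) * (Q * b + G * c + G * b * w)
       + Q * (a + b * w ^+ 2 + c * w)) / (1 - p * q).
  rewrite /alpha /beta /gamma /xi_den /Q /G; by field.
by rewrite w1 mul0r mul0r.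
Qed.

End Aux.

Theorem mainTheorem3 (C : numClosedFieldType) (p q : C)
  (hpq : p * q != 1) (hne : (p, q) != (2%:R^-1, 2%:R^-1)) :
  (regular p q <-> exists x : C, xi p q = Some x /\ `|x| <= 1) /\
  (regular p q ->
     forall x : C, xi p q = Some x ->
     forall a b c : C, positive_triple a b c ->
       modulus (Spq p q (a, b, c)) = x ^+ 3 * modulus (a, b, c)).
Proof.
have hk : 1 - p * q != 0 by rewrite subr_eq0 eq_sym.
split; last first.
  move=> _ x hx a b c _.
  move: hx; rewrite /xi; case: ifP => // hd [<-].
  have hd' : xi_den p q != 0 by rewrite hd.
  rewrite /Spq /modulus (@modA C p q a b c hk) (@modB C p q a b c hk) -exprMn.
  congr (_ ^+ 3).
  set A := a + _ + _; set B := a + _ + _.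
  have [->|hB] := eqVneq B 0; first by rewrite mulr0 invr0 !mulr0.
  by field; rewrite hB hd' hk.
set u := p - q; set v := (p - 1) * (2%:R * q - 1).
have hnum : xi_num p q = u + v * omega C by [].
have hden : xi_den p q = u + v * omega C ^+ 2 by [].
have [epq|npq] := eqVneq p q.
  subst p.
  have h2 : q != 2%:R^-1.
    apply: contra hne => /eqP ->; by [].
  have hv : v != 0.
    rewrite /v mulf_neq0 //.
      rewrite subr_eq0; apply: contra hpq => /eqP ->; by rewrite mul1r.
    rewrite subr_eq0; apply: contra h2 => /eqP h; apply/eqP.
    have -> : q = (2%:R * q) / 2%:R by field.
    by rewrite h mul1r.
  have hu : u = 0 by rewrite /u subrr.
  have hd : xi_den q q != 0.
    by rewrite hden hu add0r mulf_neq0 // expf_neq0 // (wn0 C).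
  split => [_|]; last by left.
  exists (xi_num q q / xi_den q q); split; first by rewrite /xi (negbTE hd).
  rewrite hnum hden hu !add0r.
  have -> : v * omega C / (v * omega C ^+ 2) = (omega C)^-1.
    by field; rewrite hv (wn0 C).
  by rewrite normfV (normw C) invr1.
have hu : u != 0 by rewrite /u subr_eq0.
have ht : tpq p q = v / u by [].
have hpos : 0 < 2%:R * sqrtC (3%:R : C) * (u * u^*).
  apply: mulr_gt0; [apply: mulr_gt0; [by rewrite ltr0n | exact: s_gt0] | by rewrite mul_conjC_gt0].
have key := @keyL C u v hu.
rewrite -hnum -hden in key.
have regE : regular p q <-> 0 <= 'Im (v / u).
  rewrite /regular -ht; split; first by case=> [[/eqP]|[]]; rewrite ?(negbTE npq).
  by move=> h; right.
rewrite regE; split.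
  move=> hI.
  have hge : `|xi_num p q| ^+ 2 <= `|xi_den p q| ^+ 2.
    by rewrite -subr_ge0 key mulr_ge0 // ltW.
  have hd : xi_den p q != 0.
    apply/negP => /eqP h0.
    move: hge; rewrite h0 normr0 expr0n /= => hle.
    have : `|xi_num p q| ^+ 2 == 0 by rewrite eq_le hle /= exprn_ge0.
    rewrite expf_eq0 /= normr_eq0 hnum => /eqP hn.
    move: h0; rewrite hden => hd0.
    have e : v * (omega C - omega C ^+ 2) = (u + v * omega C) - (u + v * omega C ^+ 2) by ring.
    rewrite hn hd0 subrr in e. move: e.
    have ns : 'i * sqrtC (3%:R : C) != 0 by rewrite mulf_neq0 ?neq0Ci // gt_eqF // s_gt0.
    move/eqP; rewrite (wd C) mulf_eq0 (negbTE ns) orbF => /eqP hv0.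
    by move: hn hu; rewrite hv0 mul0r addr0 => ->; rewrite eqxx.
  exists (xi_num p q / xi_den p q); split; first by rewrite /xi (negbTE hd).
  have hdp : 0 < `|xi_den p q| by rewrite normr_gt0.
  rewrite normf_div ler_pdivrMr // mul1r -(ler_pXn2r (n:=2)) // ?nnegrE ?normr_ge0 //.
move=> [x [hx hx1]].
move: hx; rewrite /xi; case: ifP => // hd [ex].
have hdp : 0 < `|xi_den p q| by rewrite normr_gt0 hd.
move: hx1; rewrite -ex normf_div ler_pdivrMr // mul1r -(ler_pXn2r (n:=2)) ?nnegrE ?normr_ge0 //.
rewrite -subr_ge0 key => h.
by rewrite -(pmulr_rge0 _ hpos).
Qed.
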